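(* Let $N$ be a positive integer, $L>0$, and $\zeta=(\zeta_0,\dots,\zeta_{N+2})\in\mathbb{R}^{N+3}$ with $\zeta_0>\zeta_1>\dots>\zeta_{N+1}>\zeta_{N+2}=0$. Let $W^\zeta$ and $w^\zeta$ be as defined in the context. Let $\bar y=(\bar y_0,\dots,\bar y_N)\in\mathbb{R}^{N+1}$. If $\bar y_k\geq 0$ for some $k\in\{0,\dots,N\}$, then the minimization problem defining $W^\zeta(\bar y)$ has an optimal solution $(\nu^*,\alpha^* )$ in which $\alpha^*$ has the form \[ \alpha^*=(\underbrace{0,\dots,0}_{m},\alpha^*_m,1-\alpha^*_m,\underbrace{0,\dots,0}_{N-m}) \] for some $m\in\{0,\dots,N\}$, and in addition $\alpha^*_{k+1}=\dots=\alpha^*_{N+1}=0$.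
   Context: Let $e_0,\dots,e_N$ denote the standard unit vectors of $\mathbb{R}^{N+1}$ (zero-based indexing). Define for $i=0,\dots,N+1$: $x_i=-\sum_{j=0}^{i-1}\frac{\zeta_j-\zeta_{i+1}}{\sqrt{\zeta_j-\zeta_{j+1}}}e_j\in\mathbb{R}^{N+1}$; $g_i=L\sqrt{\zeta_i-\zeta_{i+1}}\,e_i$ for $i=0,\dots,N$ and $g_{N+1}=0$; $f_i=\frac L2(\zeta_i+\zeta_{i+1})$ for $i=0,\dots,N$ and $f_{N+1}=0$. For $y\in\mathbb{R}^{N+1}$, $\nu\in\mathbb{R}^{N+1}$, $\alpha=(\alpha_0,\dots,\alpha_{N+1})\in\mathbb{R}^{N+2}$ let $w^\zeta(y,\nu,\alpha)=\frac L2\|y+\nu-\sum_{i=0}^{N+1}\alpha_i(x_i-\frac1Lg_i)\|^2+\sum_{i=0}^{N+1}\alpha_i(f_i-\frac1{2L}\|g_i\|^2)$, and $W^\zeta(y)=\min\{w^\zeta(y,\nu,\alpha):\nu\in\mathbb{R}^{N+1}_+,\ \alpha\in\Delta_{N+2}\}$, where $\mathbb{R}^{N+1}_+$ is the nonnegative orthant and $\Delta_{N+2}=\{\alpha\in\mathbb{R}^{N+2}:\alpha_i\geq0,\ \sum_i\alpha_i=1\}$. An optimal solution of $W^\zeta(y)$ is a minimizing pair $(\nu,\alpha)$. *)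

(* Defs.v *)
From mathcomp Require Import all_boot all_order all_algebra.
From mathcomp Require Import reals.
Unset Printing Implicit Defensive.
Import Order.TTheory GRing.Theory Num.Theory.
Local Open Scope ring_scope.

Section Defs.
Variable R : realType.

(* Vectors of R^n are functions 'I_n -> R; zeta is indexed by nat,
   only zeta 0 .. zeta (N+2) are relevant. *)

Definition sqnorm (n : nat) (v : 'I_n -> R) : R := \sum_(j < n) v j ^+ 2.

Definition xpt (N : nat) (zeta : nat -> R) (i : nat) : 'I_N.+1 -> R :=
  fun j => if (j < i)%N then
             - ((zeta j - zeta i.+1) / Num.sqrt (zeta j - zeta j.+1))
           else 0.

Definition gpt (N : nat) (L : R) (zeta : nat -> R) (i : nat) : 'I_N.+1 -> R :=
  fun j => if ((i <= N)%N && (val j == i)) then L * Num.sqrt (zeta i - zeta i.+1)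
           else 0.

Definition fval (N : nat) (L : R) (zeta : nat -> R) (i : nat) : R :=
  if (i <= N)%N then L / 2 * (zeta i + zeta i.+1) else 0.

Definition wfun (N : nat) (L : R) (zeta : nat -> R)
    (y nu : 'I_N.+1 -> R) (alpha : 'I_N.+2 -> R) : R :=
  L / 2 * sqnorm N.+1 (fun j : 'I_N.+1 => y j + nu j
     - \sum_(i < N.+2) alpha i * (xpt N zeta i j - L^-1 * gpt N L zeta i j))
  + \sum_(i < N.+2) alpha i *
      (fval N L zeta i - (2 * L)^-1 * sqnorm N.+1 (gpt N L zeta i)).

Definition feasible (N : nat) (nu : 'I_N.+1 -> R) (alpha : 'I_N.+2 -> R) : Prop :=
  (forall j, 0 <= nu j) /\ (forall i, 0 <= alpha i) /\ \sum_(i < N.+2) alpha i = 1.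

Definition optimal_W (N : nat) (L : R) (zeta : nat -> R) (y : 'I_N.+1 -> R)
    (nu : 'I_N.+1 -> R) (alpha : 'I_N.+2 -> R) : Prop :=
  feasible N nu alpha /\
  forall nu' alpha', feasible N nu' alpha' ->
    wfun N L zeta y nu alpha <= wfun N L zeta y nu' alpha'.

End Defs.

(* Main.v *)
Require Import Defs.
From mathcomp Require Import all_boot all_order all_algebra.
From mathcomp Require Import all_classical all_reals all_analysis.
From mathcomp Require Import ring lra.
Import numFieldNormedType.Exports.
Import Order.TTheory GRing.Theory Num.Theory.
Local Open Scope ring_scope.

Section S.
Variables (R : realType) (N : nat) (L : R) (zeta : nat -> R) (y : 'I_N.+1 -> R).

Definition X (i : nat) (j : 'I_N.+1) : R := xpt R N zeta i j - L^-1 * gpt R N L zeta i j.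
Definition C (i : nat) : R := fval R N L zeta i - (2 * L)^-1 * sqnorm R N.+1 (gpt R N L zeta i).
Definition E (nu : 'I_N.+1 -> R) (alpha : 'I_N.+2 -> R) (j : 'I_N.+1) : R :=
  y j + nu j - \sum_(i < N.+2) alpha i * X i j.
Definition G nu alpha (i : nat) : R := C i - L * \sum_(j < N.+1) E nu alpha j * X i j.

Lemma wfunE nu alpha : wfun R N L zeta y nu alpha =
  L / 2 * \sum_(j < N.+1) E nu alpha j ^+ 2 + \sum_(i < N.+2) alpha i * C i.
Proof. by []. Qed.

Lemma kkt nu alpha lam : 0 < L -> feasible R N nu alpha ->
  (forall j, 0 <= E nu alpha j) -> (forall j, nu j * E nu alpha j = 0) ->
  (forall i : 'I_N.+2, lam <= G nu alpha i) ->
  (forall i : 'I_N.+2, alpha i * G nu alpha i = alpha i * lam) ->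
  optimal_W R N L zeta y nu alpha.
Proof.
move=> L0 hf hE hnE hlam heq; split => // nu' al' [hn' [ha' hs']].
have [_ [_ hs]] := hf.
rewrite !wfunE.
set e := E nu alpha; set e' := E nu' al'.
have step1 : L / 2 * \sum_j e j ^+ 2 + L * \sum_j e j * (e' j - e j)
    <= L / 2 * \sum_j e' j ^+ 2.
  have s1 : \sum_j e j ^+ 2 + 2 * \sum_j e j * (e' j - e j) <= \sum_j e' j ^+ 2.
    rewrite mulr_sumr -big_split /=; apply: ler_sum => j _.
    have := sqr_ge0 (e' j - e j); lra.
  have L2 : 0 <= L / 2 by apply: divr_ge0; lra.
  have := ler_wpM2l L2 s1; lra.
have step2 : \sum_j e j * (e' j - e j) =
    \sum_j e j * nu' j - \sum_j e j * nu j
    - \sum_(i < N.+2) (al' i - alpha i) * \sum_j e j * X i j.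
  have -> : \sum_(i < N.+2) (al' i - alpha i) * \sum_j e j * X i j =
     \sum_j e j * \sum_(i < N.+2) (al' i - alpha i) * X i j.
    under eq_bigr do rewrite mulr_sumr.
    rewrite exchange_big /=; apply: eq_bigr => j _; rewrite mulr_sumr.
    by apply: eq_bigr => i _; rewrite mulrCA.
  rewrite -!sumrB; apply: eq_bigr => j _.
  rewrite /e' /e /E.
  have -> : \sum_(i < N.+2) (al' i - alpha i) * X i j =
     \sum_(i < N.+2) al' i * X i j - \sum_(i < N.+2) alpha i * X i j.
    by rewrite -sumrB; apply: eq_bigr => i _; rewrite mulrBl.
  ring.
have step3 : 0 <= \sum_j e j * nu' j.
  by apply: sumr_ge0 => j _; apply: mulr_ge0.
have step4 : \sum_j e j * nu j = 0.
  by apply: big1 => j _; rewrite mulrC hnE.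
have step5 : \sum_(i < N.+2) alpha i * G nu alpha i = lam.
  under eq_bigr do rewrite heq.
  by rewrite -big_distrl /= hs mul1r.
have step6 : lam <= \sum_(i < N.+2) al' i * G nu alpha i.
  have -> : lam = \sum_(i < N.+2) al' i * lam by rewrite -big_distrl /= hs' mul1r.
  by apply: ler_sum => i _; apply: ler_wpM2l.
have step7 : \sum_(i < N.+2) (al' i - alpha i) * C i
   - L * \sum_(i < N.+2) (al' i - alpha i) * \sum_j e j * X i j =
   \sum_(i < N.+2) al' i * G nu alpha i - \sum_(i < N.+2) alpha i * G nu alpha i.
  rewrite mulr_sumr -sumrB -sumrB; apply: eq_bigr => i _; rewrite /G -/e; ring.
have step8 : \sum_(i < N.+2) (al' i - alpha i) * C i =
   \sum_(i < N.+2) al' i * C i - \sum_(i < N.+2) alpha i * C i.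
  by rewrite -sumrB; apply: eq_bigr => i _; rewrite mulrBl.
rewrite step2 step4 in step1.
have hL : 0 <= L * \sum_j e j * nu' j by apply: mulr_ge0 => //; lra.
rewrite step5 in step7.
nra.
Qed.

Hypothesis L0 : 0 < L.
Hypothesis hz : forall i : nat, (i <= N.+1)%N -> zeta i.+1 < zeta i.
Hypothesis hz0 : zeta N.+2 = 0.

Definition s (j : nat) : R := Num.sqrt (zeta j - zeta j.+1).

Lemma s_gt0 (j : nat) : (j <= N.+1)%N -> 0 < s j.
Proof. by move=> hj; rewrite /s sqrtr_gt0 subr_gt0 hz. Qed.

Lemma s_sq (j : nat) : (j <= N.+1)%N -> s j ^+ 2 = zeta j - zeta j.+1.
Proof. by move=> hj; rewrite /s sqr_sqrtr // subr_ge0 ltW // hz. Qed.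

Lemma zeta_mono (a b : nat) : (a <= b)%N -> (b <= N.+2)%N -> zeta b <= zeta a.
Proof.
move=> hab; elim: b hab => [|b IH] hab hb.
  by rewrite leqn0 in hab; rewrite (eqP hab).
case: (ltngtP a b.+1) hab => // [hlt _|-> _]; last by [].
apply: le_trans (IH hlt (ltnW hb)); apply: ltW; apply: hz; by [].
Qed.

Definition T (i : nat) (j : 'I_N.+1) : R := if (j <= i)%N then zeta j - zeta i.+1 else 0.

Lemma Xform (i : nat) (j : 'I_N.+1) : X i j = - (T i j / s j).
Proof.
have hj : (j <= N.+1)%N by exact: ltnW (ltn_ord j).
rewrite /X /T /xpt /gpt.
case: (ltngtP j i) => [hlt|hgt|heq].
- by rewrite andbF mulr0 subr0.
- by rewrite andbF mulr0 subr0 mul0r oppr0.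
- have hi : (i <= N)%N by rewrite -heq -ltnS.
  rewrite andbT hi sub0r mulrA mulVf ?gt_eqF // mul1r -heq -/(s j).
  by rewrite -(s_sq _ hj) expr2 mulfK ?gt_eqF ?s_gt0.
Qed.

Lemma Cform (i : 'I_N.+2) : C i = L * zeta i.+1.
Proof.
rewrite /C /fval /sqnorm.
case: (leqP i N) => hi.
- rewrite (bigD1 (Ordinal (hi : (i < N.+1)%N))) //= big1; last first.
    move=> j hj; rewrite /gpt hi /=.
    have -> : (val j == i) = false.
      by apply/negbTE; apply: contra hj => /eqP h; apply/eqP/val_inj.
    by rewrite expr0n.
  rewrite /gpt hi eqxx /= addr0 exprMn -/(s i) s_sq; last by apply: ltnW.
  field; rewrite gt_eqF //.
- have -> : val i = N.+1 by apply/eqP; rewrite eqn_leq hi -ltnS ltn_ord.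
  rewrite hz0 mulr0 big1 ?mulr0 ?subr0 // => j _.
  by rewrite /gpt ltnn /= expr0n.
Qed.

Definition rho nu al (j : 'I_N.+1) : R := E nu al j / s j.
Definition P nu al (m : nat) : R := \sum_(j < N.+1) if (j <= m)%N then rho nu al j else 0.

Lemma Gform nu al (i : 'I_N.+2) :
  G nu al i = L * zeta i.+1 + L * \sum_(j < N.+1) rho nu al j * T i j.
Proof.
rewrite /G Cform; congr (_ + _); rewrite -mulrN -sumrN; congr (_ * _).
apply: eq_bigr => j _; rewrite Xform /rho; field.
have hj : (j <= N.+1)%N by exact: ltnW (ltn_ord j).
by rewrite gt_eqF // s_gt0.
Qed.


Lemma eqle (a b : R) : a = b -> a <= b. Proof. by move->. Qed.

Lemma P_sum nu al m D : P nu al m * D =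
  \sum_(j < N.+1) (if (j <= m)%N then rho nu al j else 0) * D.
Proof. by rewrite /P big_distrl. Qed.

Lemma Gdiff nu al (i m : 'I_N.+2) : G nu al i - G nu al m =
  L * (zeta i.+1 - zeta m.+1) + L * \sum_(j < N.+1) (rho nu al j * T i j - rho nu al j * T m j).
Proof. rewrite !Gform sumrB; ring. Qed.

Lemma Gup nu al (i m : 'I_N.+2) : (forall j, 0 <= rho nu al j) ->
  (m < i)%N -> 1 <= P nu al m.+1 -> G nu al m <= G nu al i.
Proof.
move=> hr hmi hP; rewrite -subr_ge0 Gdiff.
set D := zeta m.+1 - zeta i.+1.
have hD : 0 <= D by rewrite subr_ge0 zeta_mono // ltnS ?(ltnW hmi) // ltn_ord.
have hi2 : (i.+1 <= N.+2)%N by rewrite ltnS -ltnS ltn_ord.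
have hs : P nu al m.+1 * D <= \sum_(j < N.+1) (rho nu al j * T i j - rho nu al j * T m j).
  rewrite P_sum; apply: ler_sum => j _; have := hr j; rewrite /T.
  set r := rho nu al j.
  case: (leqP j m) => hjm.
    have -> : (j <= m.+1)%N by apply: leqW.
    have -> : (j <= i)%N by apply: leq_trans hjm (ltnW hmi).
    move=> _; rewrite /D; apply: eqle; ring.
  case: (ltngtP j m.+1) => hj; first by rewrite ltnNge hjm in hj.
  - have hj2 : (m.+1 < j)%N by [].
    rewrite mul0r mulr0 subr0 => r0.
    case: ifP => hji; last by rewrite mulr0.
    by apply: mulr_ge0 => //; rewrite subr_ge0 zeta_mono // leqW.
  - rewrite hj hmi mulr0 subr0 => r0; rewrite /D; apply: eqle; ring.
have h1 := ler_wpM2l (ltW L0) hs.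
have h2 : 0 <= L * ((P nu al m.+1 - 1) * D).
  by apply: mulr_ge0; [exact: ltW | apply: mulr_ge0 => //; rewrite subr_ge0].
have -> : zeta i.+1 - zeta m.+1 = - D by rewrite /D opprB.
move: h1 h2; set S := \sum_(j < N.+1) _; set p := P nu al m.+1 => h1 h2.
have e : L * ((p - 1) * D) = L * (p * D) - L * D by ring.
lra.
Qed.

Lemma Gdown nu al (i m : 'I_N.+2) : (forall j, 0 <= rho nu al j) ->
  (i < m)%N -> P nu al m <= 1 -> G nu al m <= G nu al i.
Proof.
move=> hr him hP; rewrite -subr_ge0 Gdiff.
set D := zeta i.+1 - zeta m.+1.
have hD : 0 <= D by rewrite subr_ge0 zeta_mono // ltnS ?(ltnW him) // ltn_ord.
have hs : - (P nu al m * D) <= \sum_(j < N.+1) (rho nu al j * T i j - rho nu al j * T m j).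
  rewrite P_sum -sumrN; apply: ler_sum => j _; have := hr j; rewrite /T.
  set r := rho nu al j.
  case: (leqP j i) => hji.
    have -> : (j <= m)%N by apply: leq_trans hji (ltnW him).
    move=> _; rewrite /D; apply: eqle; ring.
  case: (leqP j m) => hjm r0; last by rewrite mul0r oppr0 mulr0 subr0.
  rewrite mulr0 sub0r -mulNr mulNr lerN2 /D ler_wpM2l //.
  rewrite lerD2r zeta_mono //.
  by rewrite (leq_trans (ltnW (ltn_ord j))) // leqnSn.
have h1 := ler_wpM2l (ltW L0) hs.
have h2 : 0 <= L * ((1 - P nu al m) * D).
  by apply: mulr_ge0; [exact: ltW | apply: mulr_ge0 => //; rewrite subr_ge0].
move: h1 h2; set S := \sum_(j < N.+1) _; set p := P nu al m => h1 h2.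
have e : L * ((1 - p) * D) = L * D + L * (- (p * D)) by ring.
lra.
Qed.

Lemma Gnext nu al (i m : 'I_N.+2) : val i = m.+1 ->
  G nu al i - G nu al m = L * (zeta m.+1 - zeta m.+2) * (P nu al m.+1 - 1).
Proof.
move=> hi; rewrite Gdiff.
have -> : \sum_(j < N.+1) (rho nu al j * T i j - rho nu al j * T m j) =
    P nu al m.+1 * (zeta m.+1 - zeta m.+2).
  rewrite P_sum; apply: eq_bigr => j _; rewrite /T hi.
  case: (leqP j m) => hjm.
    by rewrite leqW //; ring.
  case: (ltngtP j m.+1) => hj; first by rewrite ltnNge hjm in hj.
  - by rewrite !mulr0 mul0r subr0.
  - by rewrite hj; ring.
rewrite hi; ring.
Qed.


Definition pp (t : R) : R := (t + `|t|) / 2.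
Lemma ppE t : pp t = if 0 <= t then t else 0.
Proof.
rewrite /pp; case: ifP => h.
  by rewrite ger0_norm //; field.
by rewrite ltr0_norm ?subrr ?mul0r // ltNge h.
Qed.
Lemma pp_ge0 t : 0 <= pp t.
Proof. by rewrite ppE; case: ifP. Qed.

Definition Sx (al : 'I_N.+2 -> R) (j : 'I_N.+1) : R := \sum_(i < N.+2) al i * X i j.
Definition nn (al : 'I_N.+2 -> R) (j : 'I_N.+1) : R := pp (Sx al j - y j).

Lemma Enn al j : E (nn al) al j = pp (y j - Sx al j).
Proof. rewrite /E /nn -/(Sx al j) !ppE; case: ifP; case: ifP; lra. Qed.

Lemma nnE al j : nn al j * E (nn al) al j = 0.
Proof. rewrite Enn /nn !ppE; case: ifP; case: ifP => h1 h2; try lra; nra. Qed.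

Lemma rho_ge0 al j : 0 <= rho (nn al) al j.
Proof.
rewrite /rho Enn; apply: divr_ge0; first exact: pp_ge0.
by apply: ltW; apply: s_gt0; exact: ltnW (ltn_ord j).
Qed.

Definition alm (m : nat) (a : R) (i : 'I_N.+2) : R :=
  if val i == m then 1 - a else if val i == m.+1 then a else 0.

Lemma sum_alm (F : nat -> R) m a : (m <= N)%N ->
  \sum_(i < N.+2) alm m a i * F i = (1 - a) * F m + a * F m.+1.
Proof.
move=> hm.
have hm1 : (m < N.+2)%N by apply: leq_trans hm _.
have hm2 : (m.+1 < N.+2)%N by rewrite ltnS ltnS.
rewrite (bigD1 (Ordinal hm1)) //= (bigD1 (Ordinal hm2)) /=; last first.
  by rewrite -val_eqE /= eqn_leq ltnn.
rewrite big1 ?addr0.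
  by rewrite /alm /= eqxx eqn_leq ltnn /= eqxx.
move=> i /andP [h1 h2]; rewrite /alm.
have -> : (val i == m) = false.
  by apply/negbTE; apply: contra h1 => /eqP h; apply/eqP/val_inj.
have -> : (val i == m.+1) = false.
  by apply/negbTE; apply: contra h2 => /eqP h; apply/eqP/val_inj.
by rewrite mul0r.
Qed.

Lemma kkt_alm m a : (m <= N)%N -> 0 <= a <= 1 ->
  ((m = 0)%N \/ P (nn (alm m a)) (alm m a) m <= 1) ->
  1 <= P (nn (alm m a)) (alm m a) m.+1 ->
  (a = 0 \/ P (nn (alm m a)) (alm m a) m.+1 = 1) ->
  optimal_W R N L zeta y (nn (alm m a)) (alm m a).
Proof.
move=> hm /andP [ha0 ha1] hPm hPm1 ha.
set al := alm m a; set nu := nn al.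
have hm1 : (m < N.+2)%N by apply: leq_trans hm _.
have hm2 : (m.+1 < N.+2)%N by rewrite ltnS ltnS.
pose mo := Ordinal hm1.
have hr : forall j, 0 <= rho nu al j by move=> j; apply: rho_ge0.
apply: (@kkt nu al (G nu al m)) => //.
- split; first by move=> j; apply: pp_ge0.
  split.
    move=> i; rewrite /al /alm; case: ifP => _; first by lra.
    by case: ifP.
  have := sum_alm (fun=> 1) m a hm; rewrite /= !mulr1 subrK => <-.
  by apply: eq_bigr => i _; rewrite mulr1.
- by move=> j; rewrite /nu Enn; apply: pp_ge0.
- by move=> j; apply: nnE.
- move=> i; case: (ltngtP i m) => hi.
  + case: hPm => [hm0|hPm]; first by rewrite hm0 in hi.
    exact: (@Gdown nu al i mo).
  + exact: (@Gup nu al i mo).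
  + by rewrite hi.
- move=> i; rewrite /al {1 3}/alm.
  case: ifP => [/eqP -> //|_].
  case: ifP => [/eqP hi|_]; last by rewrite !mul0r.
  case: ha => [-> | hP1]; first by rewrite !mul0r.
  congr (_ * _); apply/eqP; rewrite -subr_eq0.
  by rewrite (@Gnext nu al i mo) //= hP1 subrr mulr0.
Qed.


Lemma Sx_alm m a j : (m <= N)%N -> Sx (alm m a) j = (1 - a) * X m j + a * X m.+1 j.
Proof. exact: (sum_alm (fun i => X i j) m a). Qed.

Lemma P_mono nu al m m' : (forall j, 0 <= rho nu al j) -> (m <= m')%N ->
  P nu al m <= P nu al m'.
Proof.
move=> hr hm; apply: ler_sum => j _.
case: ifP => h1; first by rewrite (leq_trans h1 hm).
by case: ifP.
Qed.

Lemma Pk (k : 'I_N.+1) : 0 <= y k -> 1 <= P (nn (alm k 0)) (alm k 0) k.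
Proof.
move=> hy.
have hk : (k <= N)%N by rewrite -ltnS.
have hkN : (k <= N.+1)%N by apply: ltnW.
have hs := s_gt0 _ hkN.
apply: le_trans (_ : rho (nn (alm k 0)) (alm k 0) k <= _).
  rewrite /rho Enn Sx_alm // Xform /T leqnn subr0 mul0r addr0 mul1r opprK.
  rewrite -(s_sq _ hkN) expr2 mulfK ?gt_eqF // ppE.
  have -> : 0 <= y k + s k by apply: addr_ge0 => //; apply: ltW.
  by rewrite ler_pdivlMr // mul1r lerDr.
rewrite /P (bigD1 k) //= leqnn lerDl; apply: sumr_ge0 => j _.
by case: ifP => // _; apply: rho_ge0.
Qed.

Lemma alm_shift n : alm n 1 = alm n.+1 0.
Proof.
apply: boolp.funext => i; rewrite /alm.
case: (eqVneq (val i) n) => [->|h1].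
  by rewrite subrr (ltn_eqF (ltnSn n)) (ltn_eqF (leqnSn n.+1)).
by rewrite subr0; case: ifP => _ //; case: ifP.

Qed.

Lemma cont_aff (c p q w : R) :
  continuous (fun a : R => ((c - ((1 - a) * p + a * q)) + `|c - ((1 - a) * p + a * q)|) / 2 * w).
Proof.
move=> x /=. apply: cvgM; last exact: cvg_cst.
apply: cvgM; last exact: cvg_cst.
apply: cvgD; last apply: cvg_norm;
  (apply: cvgB; first exact: cvg_cst);
  (apply: cvgD; apply: cvgM; try exact: cvg_cst; try exact: cvg_id);
  (apply: cvgB; [exact: cvg_cst | exact: cvg_id]).
Qed.

Lemma cont_sum n (f : 'I_n -> R -> R) :
  (forall j, continuous (f j)) -> continuous (fun a => \sum_(j < n) f j a).
Proof.
elim: n f => [|n IH] f hf.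
  under eq_fun do rewrite big_ord0. by move=> x; apply: cvg_cst.
under eq_fun do rewrite big_ord_recr /=.
move=> x; apply: cvgD; last exact: hf.
by apply: (IH (fun j => f (widen_ord (leqnSn n) j))) => j; apply: hf.
Qed.

Lemma P_cont n : (n <= N)%N ->
  continuous (fun a => P (nn (alm n a)) (alm n a) n.+1).
Proof.
move=> hn.
have -> : (fun a => P (nn (alm n a)) (alm n a) n.+1) =
  (fun a => \sum_(j < N.+1) if (j <= n.+1)%N then
     ((y j - ((1 - a) * X n j + a * X n.+1 j)) +
       `|y j - ((1 - a) * X n j + a * X n.+1 j)|) / 2 * (s j)^-1 else 0).
  apply: boolp.funext => a; apply: eq_bigr => j _.
  by rewrite /rho Enn Sx_alm.
apply: cont_sum => j /=; case: (j <= n.+1)%N; first exact: cont_aff.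
by move=> x; apply: cvg_cst.
Qed.


Definition PP m a := P (nn (alm m a)) (alm m a).

Lemma finish (k : 'I_N.+1) m a : (m <= k)%N -> (a = 0 \/ (m < k)%N) -> 0 <= a <= 1 ->
  ((m = 0)%N \/ PP m a m <= 1) -> 1 <= PP m a m.+1 -> (a = 0 \/ PP m a m.+1 = 1) ->
  exists (nu : 'I_N.+1 -> R) (alpha : 'I_N.+2 -> R),
    optimal_W R N L zeta y nu alpha /\
    exists m : nat, (m <= N)%N /\
      (forall i : 'I_N.+2, (val i < m)%N || (m.+1 < val i)%N -> alpha i = 0) /\
      (forall i j : 'I_N.+2, val i = m -> val j = m.+1 -> alpha j = 1 - alpha i) /\
      (forall i : 'I_N.+2, (k < val i)%N -> alpha i = 0).
Proof.
move=> hmk ha ha01 h1 h2 h3.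
have hmN : (m <= N)%N by rewrite -ltnS (leq_ltn_trans hmk).
exists (nn (alm m a)), (alm m a); split; first exact: kkt_alm.
exists m; split=> //; split.
  move=> i /orP [] hi; rewrite /alm.
    by rewrite (ltn_eqF hi) (ltn_eqF (leqW hi)).
  by rewrite (gtn_eqF (ltnW hi)) (gtn_eqF hi).
split.
  move=> i j hi hj; rewrite /alm hi hj !eqxx (gtn_eqF (ltnSn m)); ring.
move=> i hi; rewrite /alm.
have -> : (val i == m) = false by apply: gtn_eqF; apply: leq_ltn_trans hi.
case: eqP => // hi1; case: ha => // hmk'.
by move: hi; rewrite hi1 ltnNge hmk'.
Qed.

Lemma mainS (k : 'I_N.+1) : 0 <= y k ->
  exists (nu : 'I_N.+1 -> R) (alpha : 'I_N.+2 -> R),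
    optimal_W R N L zeta y nu alpha /\
    exists m : nat, (m <= N)%N /\
      (forall i : 'I_N.+2, (val i < m)%N || (m.+1 < val i)%N -> alpha i = 0) /\
      (forall i j : 'I_N.+2, val i = m -> val j = m.+1 -> alpha j = 1 - alpha i) /\
      (forall i : 'I_N.+2, (k < val i)%N -> alpha i = 0).
Proof.
move=> hy.
have hex : exists m, (m <= k)%N && (1 <= PP m 0 m) by exists k; rewrite leqnn Pk.
case: (ex_minnP hex) => m0 /andP [hm0k hP0] hmin.
have hr : forall m a j, 0 <= rho (nn (alm m a)) (alm m a) j by move=> *; apply: rho_ge0.
have hkN : (k <= N)%N by rewrite -ltnS.
case: m0 hm0k hP0 hmin => [|n] hm0k hP0 hmin.
  apply: (finish k 0 0) => //.
  - by left.
  - by rewrite lexx ler01.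
  - by left.
  - by apply: le_trans hP0 _; rewrite /PP; apply: P_mono.
  - by left.
have hnk : (n < k)%N by [].
have hn : PP n 0 n < 1.
  rewrite ltNge; apply/negP => h.
  by have := hmin n; rewrite (ltnW hnk) h ltnn => /(_ isT).
have hnN : (n <= N)%N by apply: leq_trans (ltnW hnk) hkN.
case: (lerP 1 (PP n 0 n.+1)) => h1.
  apply: (finish k n 0) => //; first exact: ltnW.
  - by left.
  - by rewrite lexx ler01.
  - by right; apply: ltW.
  - by left.
have hf1 : PP n 1 n.+1 = PP n.+1 0 n.+1 by rewrite /PP alm_shift.
have := @IVT R (fun a => PP n a n.+1) 0 1 1 ler01.
case.
- apply: continuous_subspaceT; exact: P_cont.
- rewrite /= hf1; apply/andP; split.
    by rewrite ge_min (ltW h1).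
  by rewrite le_max hP0 orbT.
move=> c; rewrite in_itv /= => /andP [c0 c1] hc.
apply: (finish k n c) => //.
- exact: ltnW.
- by right.
- by rewrite c0 c1.
- right; rewrite -hc; apply: P_mono => //.
- by rewrite hc.
- by right.
Qed.

End S.

Theorem theorem2 (R : realType) (N : nat) (L : R) (zeta : nat -> R)
    (ybar : 'I_N.+1 -> R) (k : 'I_N.+1) :
  (0 < N)%N -> 0 < L ->
  (forall i : nat, (i <= N.+1)%N -> zeta i.+1 < zeta i) ->
  zeta N.+2 = 0 ->
  0 <= ybar k ->
  exists (nu : 'I_N.+1 -> R) (alpha : 'I_N.+2 -> R),
    optimal_W R N L zeta ybar nu alpha /\
    exists m : nat, (m <= N)%N /\
      (forall i : 'I_N.+2, (val i < m)%N || (m.+1 < val i)%N -> alpha i = 0) /\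
      (forall i j : 'I_N.+2, val i = m -> val j = m.+1 -> alpha j = 1 - alpha i) /\
      (forall i : 'I_N.+2, (k < val i)%N -> alpha i = 0).
Proof.
move=> _ L0 hz hz0 hy.
by apply: mainS.
Qed.
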